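(* For every $k\ge 2$, the odd graph $O_k$ has no quantum symmetry, i.e. $C(G_{aut}^+(O_k))$ is commutative.
   Context: The odd graph $O_k$ ($k\ge2$) has as vertices the $(k-1)$-element subsets of $\{1,\dots,2k-1\}$, two vertices being adjacent iff the subsets are disjoint. For a finite simple undirected graph $\Gamma=(V,E)$ with $V=\{1,\dots,n\}$, $C(G_{aut}^+(\Gamma))$ is the universal unital $C^*$-algebra generated by $u_{ij}$, $1\le i,j\le n$, with relations: (R1) $u_{ij}=u_{ij}^*=u_{ij}^2$; (R2) $\sum_{l} u_{il}=1=\sum_{l} u_{li}$ for all $i$; (R3) $u_{ij}u_{kl}=u_{kl}u_{ij}=0$ whenever exactly one of $(i,k)\in E$, $(j,l)\in E$ holds. $\Gamma$ has no quantum symmetry if $C(G_{aut}^+(\Gamma))$ is commutative (equivalently $G_{aut}^+(\Gamma)=\mathrm{Aut}(\Gamma)$). *)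

(* Defs.v *)
From Stdlib Require Import Reals.
From mathcomp Require Import all_boot.

Set Implicit Arguments.
Unset Strict Implicit.
Unset Printing Implicit Defensive.

Record Cx : Type := mkCx { Cre : R; Cim : R }.
Definition Cadd (a b : Cx) : Cx := mkCx (Rplus (Cre a) (Cre b)) (Rplus (Cim a) (Cim b)).
Definition Cmul (a b : Cx) : Cx :=
  mkCx (Rminus (Rmult (Cre a) (Cre b)) (Rmult (Cim a) (Cim b)))
       (Rplus (Rmult (Cre a) (Cim b)) (Rmult (Cim a) (Cre b))).
Definition Cconj (a : Cx) : Cx := mkCx (Cre a) (Ropp (Cim a)).
Definition Cone : Cx := mkCx R1 R0.
Definition Cmod (a : Cx) : R := sqrt (Rplus (Rmult (Cre a) (Cre a)) (Rmult (Cim a) (Cim a))).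

Record CStarAlgebra : Type := {
  car :> Type;
  zero : car; one : car;
  add : car -> car -> car; opp : car -> car; mul : car -> car -> car;
  scal : Cx -> car -> car; star : car -> car; norm : car -> R;
  addA : forall x y z, add x (add y z) = add (add x y) z;
  addC : forall x y, add x y = add y x;
  add0 : forall x, add zero x = x;
  addN : forall x, add (opp x) x = zero;
  scalDl : forall a b x, scal (Cadd a b) x = add (scal a x) (scal b x);
  scalDr : forall a x y, scal a (add x y) = add (scal a x) (scal a y);
  scalA : forall a b x, scal (Cmul a b) x = scal a (scal b x);
  scal1 : forall x, scal Cone x = x;
  mulA : forall x y z, mul x (mul y z) = mul (mul x y) z;
  mul1l : forall x, mul one x = x;
  mul1r : forall x, mul x one = x;
  mulDl : forall x y z, mul (add x y) z = add (mul x z) (mul y z);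
  mulDr : forall x y z, mul x (add y z) = add (mul x y) (mul x z);
  scalMl : forall a x y, scal a (mul x y) = mul (scal a x) y;
  scalMr : forall a x y, scal a (mul x y) = mul x (scal a y);
  starK : forall x, star (star x) = x;
  starD : forall x y, star (add x y) = add (star x) (star y);
  starM : forall x y, star (mul x y) = mul (star y) (star x);
  starZ : forall a x, star (scal a x) = scal (Cconj a) (star x);
  norm_ge0 : forall x, Rle R0 (norm x);
  norm_eq0 : forall x, norm x = R0 -> x = zero;
  normD : forall x y, Rle (norm (add x y)) (Rplus (norm x) (norm y));
  normZ : forall a x, norm (scal a x) = Rmult (Cmod a) (norm x);
  normM : forall x y, Rle (norm (mul x y)) (Rmult (norm x) (norm y));
  norm_cstar : forall x, norm (mul (star x) x) = Rmult (norm x) (norm x);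
  complete : forall u : nat -> car,
    (forall eps : R, Rlt R0 eps -> exists N : nat, forall m n : nat,
        (N <= m)%coq_nat -> (N <= n)%coq_nat -> Rlt (norm (add (u m) (opp (u n)))) eps) ->
    exists l : car, forall eps : R, Rlt R0 eps -> exists N : nat, forall n : nat,
        (N <= n)%coq_nat -> Rlt (norm (add (u n) (opp l))) eps
}.

(* A family u_ij (i,j in V) in a unital C*-algebra A satisfying (R1)-(R3),
   i.e. a representation of the generators of C(G_aut^+(Gamma)). *)
Definition qaut_relations (V : finType) (adj : rel V) (A : CStarAlgebra)
    (u : V -> V -> A) : Prop :=
  (forall i j, u i j = @star A (u i j) /\ u i j = @mul A (u i j) (u i j)) /\
  (forall i, \big[@add A / zero A]_(l : V) u i l = one A /\
             \big[@add A / zero A]_(l : V) u l i = one A) /\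
  (forall i j k l, adj i k != adj j l ->
     @mul A (u i j) (u k l) = zero A /\ @mul A (u k l) (u i j) = zero A).

(* Since this
   universal C*-algebra is generated by the u_ij and every family satisfying
   (R1)-(R3) in a unital C*-algebra factors through it (and it is itself such a
   family), commutativity is stated via the universal property: in every unital
   C*-algebra, any family satisfying (R1)-(R3) consists of pairwise commuting
   elements. *)
Definition no_quantum_symmetry (V : finType) (adj : rel V) : Prop :=
  forall (A : CStarAlgebra) (u : V -> V -> A), qaut_relations adj u ->
    forall i j k l, @mul A (u i j) (u k l) = @mul A (u k l) (u i j).

(* Ground set {1,...,2k-1} is represented by 'I_(2k-1). *)
Definition odd_vertex (k : nat) : predArgType :=
  {A : {set 'I_(2 * k - 1)} | #|A| == k - 1}.

Definition odd_adj (k : nat) : rel (odd_vertex k) :=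
  fun A B => [disjoint val A & val B].

(* Main.v *)
Require Import Defs.
From Stdlib Require Import Reals.
From mathcomp Require Import all_boot.
From HB Require Import structures.
From Stdlib Require Import Lra.
From mathcomp Require Import zify.
Import Defs.

Set Implicit Arguments.
Unset Strict Implicit.
Unset Printing Implicit Defensive.

Lemma addA' (A : CStarAlgebra) : associative (@add A).
Proof. move=> x y z; exact: addA. Qed.
Lemma add0l' (A : CStarAlgebra) : left_id (zero A) (@add A).
Proof. move=> x; exact: add0. Qed.
Lemma addC' (A : CStarAlgebra) : commutative (@add A).
Proof. move=> x y; exact: addC. Qed.
HB.instance Definition _ (A : CStarAlgebra) :=
  Monoid.isComLaw.Build (car A) (zero A) (@add A) (@addA' A) (@addC' A) (@add0l' A).

Section Alg.
Variable A : CStarAlgebra.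
Local Notation "x ⊕ y" := (@add A x y) (at level 50, left associativity).
Local Notation "x ⊛ y" := (@mul A x y) (at level 40, left associativity).
Local Notation z0 := (zero A).
Local Notation st := (@star A).
Implicit Types x y z : car A.

Lemma addr0 x : x ⊕ z0 = x.
Proof. by rewrite addC add0. Qed.
Lemma addrN x : x ⊕ opp x = z0.
Proof. by rewrite addC addN. Qed.
Lemma addKl x y z : x ⊕ y = x ⊕ z -> y = z.
Proof.
move=> h; have := congr1 (add (opp x)) h.
by rewrite !addA addN !add0.
Qed.
Lemma addI0 x y : x ⊕ y = x -> y = z0.
Proof. by move=> h; apply: (@addKl x); rewrite addr0. Qed.
Lemma mul0r x : z0 ⊛ x = z0.
Proof. apply: (@addI0 (z0 ⊛ x)); by rewrite -mulDl add0. Qed.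
Lemma mulr0 x : x ⊛ z0 = z0.
Proof. apply: (@addI0 (x ⊛ z0)); by rewrite -mulDr add0. Qed.
Lemma oppE x y : x ⊕ y = z0 -> y = opp x.
Proof. by move=> h; apply: (@addKl x); rewrite h addrN. Qed.
Lemma mulNr x y : opp x ⊛ y = opp (x ⊛ y).
Proof. apply: oppE; by rewrite -mulDl addrN mul0r. Qed.
Lemma mulrN x y : x ⊛ opp y = opp (x ⊛ y).
Proof. apply: oppE; by rewrite -mulDr addrN mulr0. Qed.
Lemma oppK x : opp (opp x) = x.
Proof. symmetry; apply: oppE; by rewrite addN. Qed.
Lemma star0 : st z0 = z0.
Proof. apply: (@addI0 (st z0)); by rewrite -starD add0. Qed.
Lemma starN x : st (opp x) = opp (st x).
Proof. apply: oppE; by rewrite -starD addrN star0. Qed.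

Lemma Cadd00 : Cadd (mkCx 0 0) (mkCx 0 0) = mkCx 0 0.
Proof. by rewrite /Cadd /= Rplus_0_l. Qed.
Lemma scal0 x : scal (mkCx 0 0) x = z0.
Proof. apply: (@addI0 (scal (mkCx 0 0) x)); by rewrite -scalDl Cadd00. Qed.
Lemma scalr0 a : scal a z0 = z0.
Proof. apply: (@addI0 (scal a z0)); by rewrite -scalDr add0. Qed.
Lemma norm0 : norm z0 = R0.
Proof.
rewrite -(scal0 z0) normZ /Cmod /=.
by rewrite Rmult_0_l Rplus_0_l sqrt_0 Rmult_0_l.
Qed.
Lemma cstar0 x : st x ⊛ x = z0 -> x = z0.
Proof.
move=> h; apply: norm_eq0.
have := norm_cstar x; rewrite h norm0 => e.
by case: (Rmult_integral _ _ (esym e)).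
Qed.

Lemma natmul_cancel (V : finType) (P : pred V) x k1 k2 :
  k1 != k2 -> P k1 -> P k2 ->
  \big[@add A/z0]_(k | P k) x = x -> x = z0.
Proof.
move=> nk P1 P2.
rewrite (bigD1 k1) //= (bigD1 k2) /=; last by rewrite P2 eq_sym.
set S := \big[_/_]_(i | _) _.
have [r [r0 ->]] : exists r, Rle R0 r /\ S = scal (mkCx r R0) x.
  rewrite /S; apply: (big_ind (fun y => exists r, Rle R0 r /\ y = scal (mkCx r R0) x)).
  - by exists R0; split; [lra | rewrite scal0].
  - move=> y1 y2 [r1 [h1 ->]] [r2 [h2 ->]]; exists (Rplus r1 r2); split; first lra.
    by rewrite -scalDl /Cadd /= Rplus_0_l.
  - by move=> _ _; exists R1; split; [lra | rewrite scal1].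
move=> h.
have h2 : x ⊕ scal (mkCx r R0) x = z0 by apply: (addI0 h).
have h3 : scal (mkCx (Rplus R1 r) R0) x = z0.
  have -> : mkCx (Rplus R1 r) R0 = Cadd Cone (mkCx r R0) by rewrite /Cadd /= Rplus_0_l.
  by rewrite scalDl scal1.
have -> : x = scal (mkCx (Rinv (Rplus R1 r)) R0) (scal (mkCx (Rplus R1 r) R0) x).
  rewrite -scalA /Cmul /=.
  have -> : Rminus (Rmult (Rinv (Rplus R1 r)) (Rplus R1 r)) (Rmult R0 R0) = R1.
    by field; lra.
  have -> : Rplus (Rmult (Rinv (Rplus R1 r)) R0) (Rmult R0 (Rplus R1 r)) = R0 by ring.
  by rewrite scal1.
by rewrite h3 scalr0.
Qed.

Lemma mul_sumr (V : finType) (P : pred V) x (F : V -> A) :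
  x ⊛ \big[@add A/z0]_(i | P i) F i = \big[@add A/z0]_(i | P i) (x ⊛ F i).
Proof.
apply: (big_morph (fun y => x ⊛ y)) => [a b|]; [exact: mulDr | exact: mulr0].
Qed.
Lemma mul_suml (V : finType) (P : pred V) x (F : V -> A) :
  \big[@add A/z0]_(i | P i) F i ⊛ x = \big[@add A/z0]_(i | P i) (F i ⊛ x).
Proof.
apply: (big_morph (fun y => y ⊛ x)) => [a b|]; [exact: mulDl | exact: mul0r].
Qed.
Lemma sum_single (V : finType) (F : V -> A) (y : V) :
  (forall w : V, w != y -> F w = z0) -> \big[@add A/z0]_(i : V) F i = F y.
Proof.
move=> h; rewrite (bigD1 y) //= big1 ?addr0 //.
Qed.
Lemma sum_two (V : finType) (F : V -> A) (y1 y2 : V) : y1 != y2 ->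
  (forall w : V, w != y1 -> w != y2 -> F w = z0) ->
  \big[@add A/z0]_(i : V) F i = F y1 ⊕ F y2.
Proof.
move=> ne h; rewrite (bigD1 y1) //= (bigD1 y2) /=; last by rewrite eq_sym.
rewrite big1 ?addr0 ?addA // => i /andP [] ? ?; exact: h.
Qed.
Lemma sum_cond (V : finType) (P : pred V) (F : V -> A) :
  (forall w : V, ~~ P w -> F w = z0) ->
  \big[@add A/z0]_(i : V) F i = \big[@add A/z0]_(i | P i) F i.
Proof.
move=> h; rewrite [RHS]big_mkcond /=; apply: eq_bigr => i _.
by case: ifP => // /negbT /h.
Qed.
Lemma star_sum (V : finType) (P : pred V) (F : V -> A) :
  st (\big[@add A/z0]_(i | P i) F i) = \big[@add A/z0]_(i | P i) st (F i).
Proof.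
apply: (big_morph st) => [a b|]; [exact: starD | exact: star0].
Qed.
End Alg.
Section Alg2.
Variable A : CStarAlgebra.
Local Notation "x ⊕ y" := (@add A x y) (at level 50, left associativity).
Local Notation "x ⊛ y" := (@mul A x y) (at level 40, left associativity).
Local Notation z0 := (zero A).
Local Notation st := (@star A).
Implicit Types x y z a b : car A.
Lemma proj_mul a b : a ⊛ a = a -> b ⊛ b = b -> a ⊛ b = b ⊛ a -> a ⊛ b ⊛ (a ⊛ b) = a ⊛ b.
Proof.
move=> ha hb c; rewrite mulA -[a ⊛ b ⊛ a]mulA -c mulA ha -mulA hb //.
Qed.
Lemma star_mul a b : st a = a -> st b = b -> a ⊛ b = b ⊛ a -> st (a ⊛ b) = a ⊛ b.
Proof. by move=> ha hb c; rewrite starM ha hb c. Qed.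
Lemma PPl P a b : P ⊛ P = P -> P ⊛ a = a ⊛ P -> P ⊛ a ⊛ (P ⊛ b) = P ⊛ a ⊛ b.
Proof. by move=> hP c; rewrite mulA -[P ⊛ a ⊛ P]mulA -c mulA hP. Qed.
End Alg2.
Section ABS.
Variable A : CStarAlgebra.
Local Notation "x ⊕ y" := (@add A x y) (at level 50, left associativity).
Local Notation "x ⊛ y" := (@mul A x y) (at level 40, left associativity).
Local Notation z0 := (zero A).
Local Notation st := (@star A).
Implicit Types x y z : car A.

Lemma abs_comm (P p p' r r' G : car A) :
  st p = p -> p ⊛ p = p -> st r' = r' -> r' ⊛ r' = r' ->
  P ⊛ p = p -> P ⊛ r' = r' -> p' ⊛ r' = z0 -> r ⊛ p = z0 ->
  G ⊛ P = G ⊛ (p ⊕ p') -> G ⊛ P = G ⊛ (r ⊕ r') ->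
  p ⊛ r' = p ⊛ G ⊛ r' -> p ⊛ r' = r' ⊛ p.
Proof.
move=> sp pp sr rr Pp Pr pr rp GP1 GP2 h1.
have h3 : G ⊛ r' = G ⊛ p ⊛ r'.
  by rewrite -{1}Pr mulA GP1 mulDr mulDl -!mulA pr mulr0 addr0.
have h4 : G ⊛ p = G ⊛ r' ⊛ p.
  by rewrite -{1}Pp mulA GP2 mulDr mulDl -!mulA rp mulr0 add0.
have ht : p ⊛ r' = p ⊛ r' ⊛ p ⊛ r'.
  rewrite {1}h1 -mulA h3 !mulA.
  have -> : p ⊛ G ⊛ p = p ⊛ r' ⊛ p by rewrite -mulA h4 !mulA -h1.
  done.
set h := p ⊛ r' ⊛ p.
have sh : st h = h by rewrite /h !starM sp sr mulA.
have hh : h ⊛ h = h.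
  rewrite /h -[p ⊛ r' ⊛ p ⊛ (p ⊛ r' ⊛ p)]mulA.
  have -> : p ⊛ (p ⊛ r' ⊛ p) = p ⊛ r' ⊛ p by rewrite !mulA pp.
  by rewrite !mulA -ht.
have e1 : p ⊛ r' ⊛ h = h by rewrite /h !mulA -ht.
have e2 : h ⊛ r' ⊛ p = h by rewrite /h -ht.
have e3 : p ⊛ r' ⊛ (r' ⊛ p) = h by rewrite /h mulA -[p ⊛ r' ⊛ r']mulA rr.
have s0 : r' ⊛ p ⊕ opp h = z0.
  apply: cstar0; rewrite starD starN starM sp sr sh.
  rewrite mulDl !mulDr mulNr !mulrN mulNr oppK e3 e1 mulA e2 hh.
  by rewrite addrN add0 addN.
have e4 : r' ⊛ p = h by rewrite -[h]oppK; apply: oppE; rewrite addC.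
by rewrite e4 -sh -e4 starM sp sr.
Qed.
End ABS.
Section Graph.
Variables (V : finType) (adj : rel V) (A : CStarAlgebra).
Local Notation "x ⊕ y" := (@add A x y) (at level 50, left associativity).
Local Notation "x ⊛ y" := (@mul A x y) (at level 40, left associativity).
Local Notation z0 := (zero A).
Local Notation st := (@star A).
Local Notation SUM := (\big[@add A/zero A]_(_ : V) _).

Hypothesis adj_sym : forall x y, adj x y = adj y x.
Hypothesis adj_irr : forall x, adj x x = false.
Hypothesis cn_uniq : forall a b c c', a != b -> adj a c -> adj c b ->
  adj a c' -> adj c' b -> c = c'.
Hypothesis deg2 : forall i, exists k1 k2, [/\ k1 != k2, adj i k1 & adj i k2].

Definition CN (x y : V) := [exists z, adj x z && adj z y].
Definition RR (x y : V) := CN x y && (x != y).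

Section Fam.
Variable w : V -> V -> A.
Hypothesis Hw : qaut_relations adj w.

Lemma wR3 i j k l : adj i k != adj j l -> w i j ⊛ w k l = z0.
Proof. by move=> h; case: (Hw.2.2 i j k l h). Qed.
Lemma wrow i : \big[@add A/z0]_(l : V) w i l = one A.
Proof. by case: (Hw.2.1 i). Qed.
Lemma wcol i : \big[@add A/z0]_(l : V) w l i = one A.
Proof. by case: (Hw.2.1 i). Qed.

Lemma z3l a b c : a ⊛ b = z0 -> a ⊛ b ⊛ c = z0.
Proof. by move=> ->; rewrite mul0r. Qed.
Lemma z3r a b c : b ⊛ c = z0 -> a ⊛ b ⊛ c = z0.
Proof. by move=> h; rewrite -mulA h mulr0. Qed.

Lemma ins3 a c k : a ⊛ c = \big[@add A/z0]_(p : V) (a ⊛ w k p ⊛ c).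
Proof.
transitivity (a ⊛ one A ⊛ c); first by rewrite mul1r.
by rewrite -(wrow k) mul_sumr mul_suml.
Qed.
Lemma ins3c a c k : a ⊛ c = \big[@add A/z0]_(p : V) (a ⊛ w p k ⊛ c).
Proof.
transitivity (a ⊛ one A ⊛ c); first by rewrite mul1r.
by rewrite -(wcol k) mul_sumr mul_suml.
Qed.

Lemma row_orth_gen i l m : l != m -> w i l ⊛ w i m = z0.
Proof.
move=> nlm; have [k1 [k2 [nk ad1 ad2]]] := deg2 i.
case: (pickP (fun p => adj l p && adj p m)) => [p0 /andP[hl hm] | none].
- set x := w i l ⊛ w i m.
  have T : forall k, adj i k -> w i l ⊛ w k p0 ⊛ w i m = x.
    move=> k hk; rewrite /x [RHS](ins3 _ _ k); symmetry; apply: sum_single => p np.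
    case: (boolP (adj l p)) => hlp; last by apply: z3l; apply: wR3; rewrite hk hlp.
    case: (boolP (adj p m)) => hpm; last by apply: z3r; apply: wR3; rewrite adj_sym hk hpm.
    by case/eqP: np; apply: (cn_uniq nlm).
  apply: (@natmul_cancel A V (fun k => adj i k) x k1 k2) => //.
  rewrite {2}/x (ins3c _ _ p0).
  rewrite (sum_cond (P := fun k => adj i k)); last first.
    by move=> k hk; apply: z3l; apply: wR3; rewrite hl (negbTE hk).
  by apply: eq_bigr => k hk; rewrite T.
- rewrite (ins3 _ _ k1) big1 // => p _.
  move: (none p) => /= /negbT; rewrite negb_and => /orP [] h.
  + by apply: z3l; apply: wR3; rewrite ad1 (negbTE h).
  + by apply: z3r; apply: wR3; rewrite adj_sym ad1 (negbTE h).
Qed.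

Lemma CN_half i j k l : CN i k -> ~~ CN j l -> w i j ⊛ w k l = z0.
Proof.
move=> /existsP [c /andP [hic hck]] ncn.
rewrite (ins3 _ _ c) big1 // => b _.
case: (boolP (adj j b)) => hjb; last by apply: z3l; apply: wR3; rewrite hic hjb.
case: (boolP (adj b l)) => hbl; last by apply: z3r; apply: wR3; rewrite hck hbl.
by case/negP: ncn; apply/existsP; exists b; rewrite hjb hbl.
Qed.
End Fam.

Lemma qaut_tr (w : V -> V -> A) : qaut_relations adj w ->
  qaut_relations adj (fun i j => w j i).
Proof.
move=> [h1 [h2 h3]]; split; first by move=> i j; apply: h1.
split; first by move=> i; case: (h2 i).
by move=> i j k l h; apply: h3; rewrite eq_sym.
Qed.

Variable u : V -> V -> A.
Hypothesis H : qaut_relations adj u.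

Lemma uS i j : st (u i j) = u i j.
Proof. by case: (H.1 i j) => <-. Qed.
Lemma uP i j : u i j ⊛ u i j = u i j.
Proof. by case: (H.1 i j) => _ <-. Qed.
Lemma row_orth i l m : l != m -> u i l ⊛ u i m = z0.
Proof. exact: row_orth_gen. Qed.
Lemma col_orth i l m : l != m -> u l i ⊛ u m i = z0.
Proof. exact: (row_orth_gen (qaut_tr H)). Qed.
Lemma uR3 i j k l : adj i k != adj j l -> u i j ⊛ u k l = z0.
Proof. exact: wR3. Qed.

Definition pres (R : rel V) := forall i j k l, R i k != R j l -> u i j ⊛ u k l = z0.

Lemma pres_adj : pres adj.
Proof. exact: uR3. Qed.
Lemma pres_eq : pres (fun x y => x == y).
Proof.
move=> i j k l; case: (eqVneq i k) => [<-|nik]; case: (eqVneq j l) => [<-|njl] //= _.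
- exact: row_orth.
- exact: col_orth.
Qed.
Lemma pres_neg R : pres R -> pres (fun x y => ~~ R x y).
Proof. by move=> h i j k l e; apply: h; move: e; case: (R i k); case: (R j l). Qed.
Lemma pres_and R S : pres R -> pres S -> pres (fun x y => R x y && S x y).
Proof.
move=> hR hS i j k l.
case: (boolP (R i k != R j l)) => [/hR //|]; rewrite negbK => /eqP ->.
case: (boolP (S i k != S j l)) => [/hS //|]; rewrite negbK => /eqP -> .
by rewrite eqxx.
Qed.
Lemma pres_CN : pres CN.
Proof.
move=> i j k l; case: (boolP (CN i k)) => h1; case: (boolP (CN j l)) => h2 //= _.
- exact: CN_half.
- exact: (CN_half (qaut_tr H) h2 h1).
Qed.
Lemma pres_RR : pres RR.
Proof. apply: pres_and; [exact: pres_CN | apply: pres_neg; exact: pres_eq]. Qed.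

Lemma CN_sym x y : CN x y = CN y x.
Proof.
by apply/existsP/existsP => [] [z /andP [h1 h2]]; exists z; apply/andP; split; rewrite adj_sym.
Qed.
Lemma RR_sym x y : RR x y = RR y x.
Proof. by rewrite /RR CN_sym eq_sym. Qed.

Definition Cm (i k : V) := forall j l, u i j ⊛ u k l = u k l ⊛ u i j.

Lemma Cm_sym i k : Cm i k -> Cm k i.
Proof. by move=> h j l; rewrite h. Qed.

Lemma C_triple i k j l : (forall j', j' != j -> u i j ⊛ u k l ⊛ u i j' = z0) ->
  u i j ⊛ u k l = u k l ⊛ u i j.
Proof.
move=> h.
have e : u i j ⊛ u k l = u i j ⊛ u k l ⊛ u i j.
  transitivity (u i j ⊛ u k l ⊛ one A); first by rewrite mul1r.
  rewrite -(wrow H i) mul_sumr.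
  by apply: sum_single => j' /h.
have e2 : u k l ⊛ u i j = st (u i j ⊛ u k l) by rewrite starM !uS.
by rewrite e2 e !starM !uS mulA.
Qed.

Lemma C_adj i k : adj i k -> Cm i k.
Proof.
move=> hik j l; apply: C_triple => j' nj.
case: (boolP (adj j l)) => hjl; last by apply: z3l; apply: (wR3 H); rewrite hik hjl.
case: (boolP (adj l j')) => hlj; last by apply: z3r; apply: (wR3 H); rewrite adj_sym hik hlj.
have : u i j ⊛ u i j' = z0 by apply: row_orth; rewrite eq_sym.
rewrite (ins3 H _ _ k) => <-; symmetry; apply: sum_single => l' nl.
case: (boolP (adj j l')) => h1; last by apply: z3l; apply: (wR3 H); rewrite hik h1.
case: (boolP (adj l' j')) => h2; last by apply: z3r; apply: (wR3 H); rewrite adj_sym hik h2.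
by case/eqP: nl; apply: (cn_uniq _ h1 h2 hjl hlj); rewrite eq_sym.
Qed.

Lemma S0 i k c j l q : adj i c -> adj c k -> adj j q -> adj q l -> j != l ->
  u i j ⊛ u k l = u c q ⊛ u i j ⊛ u k l.
Proof.
move=> hic hck hjq hql njl.
rewrite [LHS](ins3 H _ _ c) (@sum_single _ _ _ q); last first.
  move=> b nb.
  case: (boolP (adj j b)) => h1; last by apply: z3l; apply: (wR3 H); rewrite hic h1.
  case: (boolP (adj b l)) => h2; last by apply: z3r; apply: (wR3 H); rewrite hck h2.
  by case/eqP: nb; apply: (cn_uniq njl h1 h2 hjq hql).
have cci : Cm c i by apply: C_adj; rewrite adj_sym.
by rewrite (cci q j).
Qed.

Lemma B2 :
  (forall i k c, i != k -> adj i c -> adj c k ->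
     exists e, [&& RR e i, RR e k & ~~ adj e c]) ->
  (forall j l q y f, j != l -> adj q j -> adj q l -> adj q y -> y != j -> y != l ->
     RR j f -> ~~ adj q f -> RR f l -> ~~ RR f y) ->
  forall i k, RR i k -> Cm i k.
Proof.
move=> G4e G4s i k hR j l.
case: (boolP (RR j l)) => hjl; last first.
  rewrite !pres_RR //; first by rewrite RR_sym hR (RR_sym l j) (negbTE hjl).
  by rewrite hR (negbTE hjl).
move: hR => /andP [/existsP [c /andP [hic hck]] nik].
move: hjl => /andP [/existsP [q /andP [hjq hql]] njl].
have [e /and3P [hei hek hec]] := G4e _ _ _ nik hic hck.
have cci : Cm c i by apply: C_adj; rewrite adj_sym.
have cck : Cm c k by apply: C_adj.
set P := u c q.
have PP : P ⊛ P = P by exact: uP.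
have sP : st P = P by exact: uS.
set p := P ⊛ u i j; set p' := P ⊛ u i l; set r := P ⊛ u k j; set r' := P ⊛ u k l.
set G := \big[@add A/z0]_(f | RR j f && ~~ adj q f && RR f l) u e f.
have hqj : adj q j by rewrite adj_sym.
have GPs : forall m, RR e m -> adj c m -> G ⊛ P = G ⊛ (P ⊛ u m j ⊕ P ⊛ u m l).
  move=> m hem hcm.
  have ccm : Cm c m by apply: C_adj.
  transitivity (G ⊛ P ⊛ one A); first by rewrite mul1r.
  rewrite -(wrow H m) mul_sumr (sum_two njl); last first.
    move=> y nyj nyl.
    case: (boolP (adj q y)) => hqy; last first.
      by apply: z3r; apply: (wR3 H); rewrite hcm hqy.
    rewrite -mulA (ccm q y) mulA; apply: z3l.
    rewrite mul_suml big1 // => f /andP [/andP [f1 f2] f3].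
    have nR := G4s _ _ _ _ _ njl hqj hql hqy nyj nyl f1 f2 f3.
    by apply: pres_RR; rewrite hem (negbTE nR).
  by rewrite mulDr !mulA.
have key : p ⊛ r' = r' ⊛ p.
  apply: (abs_comm (P:=P) (p':=p') (r:=r) (G:=G)).
  - by apply: star_mul => //; [exact: uS | exact: cci].
  - by apply: proj_mul => //; [exact: uP | exact: cci].
  - by apply: star_mul => //; [exact: uS | exact: cck].
  - by apply: proj_mul => //; [exact: uP | exact: cck].
  - by rewrite /p mulA PP.
  - by rewrite /r' mulA PP.
  - rewrite /p' /r' PPl //; last exact: cci.
    by apply: z3r; apply: col_orth.
  - rewrite /r /p PPl //; last exact: cck.
    by apply: z3r; apply: col_orth; rewrite eq_sym.
  - by apply: (GPs i hei); rewrite adj_sym.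
  - by apply: (GPs k hek).
  - transitivity (p ⊛ one A ⊛ r'); first by rewrite mul1r.
    rewrite -(wrow H e) mul_sumr mul_suml.
    rewrite (sum_cond (P := fun f => RR j f && ~~ adj q f && RR f l)); last first.
      move=> f; case h1 : (RR j f) => /=; last first.
        move=> _; rewrite /p; apply: z3l; apply: z3r; apply: pres_RR.
        by rewrite RR_sym hei h1.
      case h2 : (adj q f) => /=.
        move=> _; rewrite /p (cci q j); apply: z3l; apply: z3r; apply: (wR3 H).
        by rewrite h2 adj_sym (negbTE hec).
      case h3 : (RR f l) => //= _.
      rewrite /r' (cck q l) mulA; apply: z3l; apply: z3r; apply: pres_RR.
      by rewrite hek h3.
    by rewrite /G (mul_sumr _ p) (mul_suml _ r').
have e1 : u i j ⊛ u k l = p ⊛ r'.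
  rewrite /p /r' PPl //; last exact: (cci q j).
  exact: (S0 hic hck hjq hql njl).
have e2 : u k l ⊛ u i j = r' ⊛ p.
  rewrite /p /r' PPl //; last exact: (cck q l).
  have hkc : adj k c by rewrite adj_sym.
  have hci : adj c i by rewrite adj_sym.
  have hlq : adj l q by rewrite adj_sym.
  have nlj : l != j by rewrite eq_sym.
  exact: (S0 hkc hci hlq hqj nlj).
by rewrite e1 e2.
Qed.

Lemma LemL i a a' k : a != a' -> adj i a -> adj i a' -> Cm a a' -> Cm a k ->
  Cm a' k -> Cm i k.
Proof.
move=> na ha ha' caa cak ca'k.
have decomp : forall j, u i j = \big[@add A/z0]_(b1 : V) \big[@add A/z0]_(b2 : V)
    (if adj j b1 && adj j b2 then u a b1 ⊛ u a' b2 else z0).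
  move=> j; transitivity (u i j ⊛ one A ⊛ one A); first by rewrite !mul1r.
  rewrite -{1}(wrow H a) -(wrow H a') (mul_sumr _ (u i j)) mul_suml.
  apply: eq_bigr => b1 _; rewrite mul_sumr; apply: eq_bigr => b2 _.
  case: (boolP (adj j b1)) => h1; last by apply: z3l; apply: (wR3 H); rewrite ha h1.
  case: (boolP (adj j b2)) => h2; last first.
    rewrite -mulA caa mulA; apply: z3l; apply: (wR3 H); by rewrite ha' h2.
  rewrite /= -mulA; symmetry.
  transitivity (one A ⊛ (u a b1 ⊛ u a' b2)); first by rewrite mul1l.
  rewrite -(wrow H i) mul_suml; apply: sum_single => j'' nj.
  rewrite mulA.
  case: (boolP (adj j'' b1)) => g1; last by apply: z3l; apply: (wR3 H); rewrite ha g1.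
  case: (boolP (adj j'' b2)) => g2; last first.
    rewrite -mulA caa mulA; apply: z3l; apply: (wR3 H); by rewrite ha' g2.
  case: (eqVneq b1 b2) => [eb|nb].
    by rewrite -mulA eb col_orth ?mulr0.
  case/eqP: nj; apply: (cn_uniq nb); by rewrite // adj_sym.
move=> j l; rewrite decomp mul_suml mul_sumr; apply: eq_bigr => b1 _.
rewrite mul_suml mul_sumr; apply: eq_bigr => b2 _.
case: ifP => _; last by rewrite mul0r mulr0.
by rewrite -mulA (ca'k b2 l) mulA (cak b1 l) -mulA.
Qed.

End Graph.

Section Odd.
Variable k : nat.
Hypothesis hk : 2 <= k.
Local Notation N := ('I_(2 * k - 1)).
Local Notation V := (odd_vertex k).
Local Notation adjO := (@odd_adj k).

Lemma cardV (v : V) : #|val v| = k - 1.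
Proof. exact/eqP/(valP v). Qed.
Lemma cardN : #|[set: N]| = 2 * k - 1.
Proof. by rewrite cardsT card_ord. Qed.
Lemma mkV (S : {set N}) : #|S| = k - 1 -> exists v : V, val v = S.
Proof. by move=> h; exists (@exist _ (fun A : {set N} => #|A| == k - 1) S (introT eqP h)). Qed.
Lemma cardC (S : {set N}) : #|~: S| = 2 * k - 1 - #|S|.
Proof. by rewrite cardsCs setCK card_ord. Qed.
Lemma adjE (v w : V) : adjO v w = [disjoint val v & val w].
Proof. by []. Qed.

Lemma Osym : forall x y : V, adjO x y = adjO y x.
Proof. by move=> x y; rewrite !adjE disjoint_sym. Qed.

Lemma neq_cardU (v w : V) : v != w -> k <= #|val v :|: val w|.
Proof.
move=> nvw; rewrite leqNgt; apply/negP => h.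
have e1 : val v :|: val w = val v.
  apply/eqP; rewrite eq_sym eqEcard subsetUl cardV; move: h; clear -hk; lia.
have e2 : val w \subset val v by rewrite -e1 subsetUr.
have : val w = val v.
  apply/eqP; by rewrite eqEcard e2 !cardV leqnn.
by move/val_inj => ewv; move: nvw; rewrite ewv eqxx.
Qed.

Lemma sub_eq_card (S T : {set N}) : S \subset T -> #|T| <= #|S| -> S = T.
Proof. by move=> h1 h2; apply/eqP; rewrite eqEcard h1 h2. Qed.

Lemma Ocn : forall a b c c' : V,
  a != b -> adjO a c -> adjO c b -> adjO a c' -> adjO c' b -> c = c'.
Proof.
move=> a b c c' nab h1 h2 h3 h4.
have key : forall x : V, adjO a x -> adjO x b -> val x = ~: (val a :|: val b).
  move=> x hx1 hx2; apply: sub_eq_card.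
  - rewrite setCU subsetI -!disjoints_subset.
    by apply/andP; split; [rewrite disjoint_sym; exact: hx1 | exact: hx2].
  - rewrite cardC cardV; have := neq_cardU nab; clear -hk; lia.
by apply: val_inj; rewrite (key c h1 h2) (key c' h3 h4).
Qed.

Lemma nb (i : V) (z : N) : z \notin val i ->
  exists a : V, [/\ val a = ~: val i :\ z & adjO i a].
Proof.
move=> hz.
have [a ha] : exists a : V, val a = ~: val i :\ z.
  apply: mkV; have h1 : z \in ~: val i by rewrite inE.
  have := cardsD1 z (~: val i); rewrite h1 cardC cardV /=.
  move: (#|_ :\ z|) => m; clear -hk; lia.
exists a; split => //; rewrite adjE ha.
rewrite disjoint_sym disjoints_subset; apply/subsetP => x; by rewrite !inE => /andP [_ ?].
Qed.

Lemma Odeg2 : forall i : V, exists k1 k2 : V, [/\ k1 != k2, adjO i k1 & adjO i k2].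
Proof.
move=> i.
have : 1 < #|~: val i| by rewrite cardC cardV; clear -hk; lia.
case/card_gt1P => z1 [z2 [h1 h2 n12]].
rewrite inE in h1; rewrite inE in h2.
have [a1 [e1 ad1]] := nb h1; have [a2 [e2 ad2]] := nb h2.
exists a1, a2; split => //.
apply/negP => /eqP e; have : z1 \in val a2 by rewrite e2 !inE h1 andbT.
by rewrite -e e1 !inE eqxx.
Qed.

Lemma nbsub (q a : V) : adjO q a -> val a \subset ~: val q.
Proof. by rewrite adjE disjoint_sym disjoints_subset. Qed.

Lemma RR_card (v w : V) : RR adjO v w -> #|val v :&: val w| = k - 2.
Proof.
case/andP => /existsP [c /andP [h1 h2]] nvw.
have hU := neq_cardU nvw.
have hc : val c \subset ~: (val v :|: val w).
  rewrite setCU subsetI -!disjoints_subset.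
  by apply/andP; split; [rewrite disjoint_sym; exact: h1 | exact: h2].
move: hU (subset_leq_card hc) (cardsUI (val v) (val w)).
rewrite cardC !cardV.
move: (#|val v :|: val w|) (#|val v :&: val w|) => a b; clear -hk; lia.
Qed.

Lemma card_RR (v w : V) : #|val v :&: val w| = k - 2 -> RR adjO v w.
Proof.
move=> h.
have hU : #|val v :|: val w| = k.
  move: (cardsUI (val v) (val w)); rewrite h !cardV.
  move: (#|val v :|: val w|) => a; clear -hk; lia.
have [c hc] : exists c : V, val c = ~: (val v :|: val w).
  by apply: mkV; rewrite cardC hU; clear -hk; lia.
apply/andP; split.
  apply/existsP; exists c; apply/andP; split; rewrite adjE hc.
    by rewrite disjoints_subset setCK subsetUl.
  by rewrite disjoint_sym disjoints_subset setCK subsetUr.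
apply/negP => /eqP e; move: h; rewrite e setIid cardV; clear -hk; lia.
Qed.

Lemma pairQ (q a b : V) : a != b -> adjO q a -> adjO q b ->
  val a :|: val b = ~: val q /\ #|val a :&: val b| = k - 2.
Proof.
move=> nab ha hb.
have hU := neq_cardU nab.
have e : val a :|: val b = ~: val q.
  apply: sub_eq_card; first by rewrite subUset !nbsub.
  rewrite cardC cardV; move: hU; move: (#|val a :|: val b|) => x; clear -hk; lia.
split => //.
move: (cardsUI (val a) (val b)); rewrite e cardC !cardV.
move: (#|val a :&: val b|) => x; clear -hk; lia.
Qed.

Lemma G4e_O : forall i k' c : V, i != k' -> adjO i c -> adjO c k' ->
  exists e, [&& RR adjO e i, RR adjO e k' & ~~ adjO e c].
Proof.
move=> i k' c nik hic hck.
have hci : adjO c i by rewrite Osym.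
have [eU eI] := pairQ nik hci hck.
have : 0 < #|val c| by rewrite cardV; clear -hk; lia.
case/card_gt0P => w hw.
have hwI : w \notin val i.
  apply/negP => hx; have := subsetP (nbsub hci) w hx; by rewrite inE hw.
have hwK : w \notin val k'.
  apply/negP => hx; have := subsetP (nbsub hck) w hx; by rewrite inE hw.
have hwIK : w \notin val i :&: val k' by rewrite inE negb_and hwI.
have [e he] : exists e : V, val e = w |: (val i :&: val k').
  apply: mkV; rewrite cardsU1 hwIK eI; clear -hk; lia.
exists e; apply/and3P; split.
- apply: card_RR; rewrite he.
  have -> : (w |: (val i :&: val k')) :&: val i = val i :&: val k'.
    apply/setP => x; rewrite !inE.
    case: (eqVneq x w) => [->|] /=; first by rewrite (negbTE hwI).
    by case: (x \in val i); case: (x \in val k').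
  exact: eI.
- apply: card_RR; rewrite he.
  have -> : (w |: (val i :&: val k')) :&: val k' = val i :&: val k'.
    apply/setP => x; rewrite !inE.
    case: (eqVneq x w) => [->|] /=; first by rewrite (negbTE hwK) andbF.
    by case: (x \in val i); case: (x \in val k').
  exact: eI.
- apply/negP; rewrite adjE disjoints_subset => /subsetP /(_ w).
  by rewrite he !inE eqxx hw => /(_ isT).
Qed.

Lemma G4s_O : forall j l q y f : V, j != l -> adjO q j -> adjO q l -> adjO q y ->
  y != j -> y != l -> RR adjO j f -> ~~ adjO q f -> RR adjO f l -> ~~ RR adjO f y.
Proof.
move=> j l q y f njl hqj hql hqy nyj nyl Rjf nqf Rfl; apply/negP => Rfy.
have nly : l != y by rewrite eq_sym.
have njy : j != y by rewrite eq_sym.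
have [eLY _] := pairQ nly hql hqy.
have [_ cJL] := pairQ njl hqj hql.
have [_ cJY] := pairQ njy hqj hqy.
have cJF := RR_card Rjf.
have cFL := RR_card Rfl.
have cFY := RR_card Rfy.
set X := val f :&: ~: val q.
have hX : #|X| <= k - 2.
  have : 0 < #|val f :&: val q|.
    rewrite card_gt0; apply/negP => /eqP e0.
    by move: nqf; rewrite adjE -setI_eq0 setIC e0 eqxx.
  move: (cardsID (val q) (val f)); rewrite setDE cardV -/X.
  move: (#|X|) (#|val f :&: val q|) => a b; clear -hk; lia.
have sJ : val j \subset ~: val q := nbsub hqj.
have sL : val l \subset ~: val q := nbsub hql.
have sY : val y \subset ~: val q := nbsub hqy.
have eJ : val j :&: val f = X.
  apply: sub_eq_card; last by rewrite cJF.
  apply/subsetP => x; rewrite !inE => /andP [xj xf].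
  have := subsetP sJ x xj; rewrite inE => hh.
  by rewrite xf hh.
have eL : val f :&: val l = X.
  apply: sub_eq_card; last by rewrite cFL.
  apply/subsetP => x; rewrite !inE => /andP [xf xl].
  have := subsetP sL x xl; rewrite inE => hh.
  by rewrite xf hh.
have eY : val f :&: val y = X.
  apply: sub_eq_card; last by rewrite cFY.
  apply/subsetP => x; rewrite !inE => /andP [xf xy].
  have := subsetP sY x xy; rewrite inE => hh.
  by rewrite xf hh.
have XJ : X \subset val j by rewrite -eJ subsetIl.
have XL : X \subset val l by rewrite -eL subsetIr.
have XY : X \subset val y by rewrite -eY subsetIr.
have cX : #|X| = k - 2 by rewrite -eJ.
have eJL : X = val j :&: val l.
  apply: sub_eq_card; first by rewrite subsetI XJ XL.
  by rewrite cJL cX.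
have eJY : X = val j :&: val y.
  apply: sub_eq_card; first by rewrite subsetI XJ XY.
  by rewrite cJY cX.
have JX : val j \subset X.
  apply/subsetP => x xj.
  have : x \in val l :|: val y by rewrite eLY (subsetP sJ x xj).
  rewrite inE => /orP [xl|xy].
  - by rewrite eJL inE xj xl.
  - by rewrite eJY inE xj xy.
move: (subset_leq_card JX); rewrite cardV cX; clear -hk; lia.
Qed.

Lemma capNB (I K : {set N}) z : (~: I :\ z) :&: K = (K :\: I) :\ z.
Proof.
apply/setP => x; rewrite !inE.
by case: (x == z); case: (x \in I); case: (x \in K).
Qed.

Variables (A : CStarAlgebra) (u : V -> V -> A).
Hypothesis H : qaut_relations adjO u.

Definition Pt t := forall i k' : V, #|val i :&: val k'| = t -> Cm u i k'.

Lemma P0 : Pt 0.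
Proof.
move=> i k' /eqP; rewrite cards_eq0 setI_eq0 => d.
exact: (C_adj Osym Ocn Odeg2 H d).
Qed.

Lemma Pk1 : Pt (k - 1).
Proof.
move=> i k' h.
have e1 : val i :&: val k' = val i.
  by apply: sub_eq_card; [exact: subsetIl | rewrite h cardV].
have e2 : val i = val k'.
  apply: sub_eq_card; first by rewrite -e1 subsetIr.
  by rewrite !cardV.
have -> : k' = i by apply: val_inj.
move=> j l; case: (eqVneq j l) => [->|njl] //.
rewrite (row_orth Osym Ocn Odeg2 H i njl) (row_orth Osym Ocn Odeg2 H i) //.
by rewrite eq_sym.
Qed.

Lemma Pk2 : Pt (k - 2).
Proof.
move=> i k' h; apply: (B2 Osym Ocn Odeg2 H G4e_O G4s_O); exact: card_RR.
Qed.

Lemma twoNB (i k' : V) (S : {set N}) (P : nat -> Prop) :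
  S \subset ~: val i -> 1 < #|S| ->
  (forall z, z \in S -> z \notin val i -> forall a : V, val a = ~: val i :\ z ->
     Cm u a k') -> Cm u i k'.
Proof.
move=> sS /card_gt1P [z1 [z2 [h1 h2 n12]]] hC.
have h1' : z1 \notin val i by have := subsetP sS z1 h1; rewrite inE.
have h2' : z2 \notin val i by have := subsetP sS z2 h2; rewrite inE.
have [a1 [e1 ad1]] := nb h1'; have [a2 [e2 ad2]] := nb h2'.
have na : a1 != a2.
  apply/negP => /eqP e; have : z1 \in val a2 by rewrite e2 !inE n12 h1'.
  by rewrite -e e1 !inE eqxx.
apply: (LemL Osym Ocn Odeg2 H na ad1 ad2).
- apply: (B2 Osym Ocn Odeg2 H G4e_O G4s_O); apply/andP; split => //.
  by apply/existsP; exists i; rewrite Osym ad1 ad2.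
- exact: (hC z1 h1 h1' a1 e1).
- exact: (hC z2 h2 h2' a2 e2).
Qed.

Lemma step_a t : t + 3 <= k -> Pt (k - 2 - t) -> Pt t.
Proof.
move=> ht hP i k' hik.
have cKI : #|val k' :\: val i| = k - 1 - t by rewrite cardsD setIC hik cardV.
apply: (@twoNB i k' (val k' :\: val i) (fun _ => True)).
- by apply/subsetP => x; rewrite !inE => /andP [].
- by rewrite cKI; clear -hk ht; lia.
move=> z hz hzi a ea; apply: hP.
rewrite ea capNB.
move: (cardsD1 z (val k' :\: val i)); rewrite hz cKI.
move: (#|(val k' :\: val i) :\ z|) => m; clear -hk; lia.
Qed.

Lemma step_b t : 1 <= t -> t <= k - 1 -> Pt (k - 1 - t) -> Pt t.
Proof.
move=> ht1 ht2 hP i k' hik.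
have cKI : #|val k' :\: val i| = k - 1 - t by rewrite cardsD setIC hik cardV.
have cS : #|~: val i :\: val k'| = t + 1.
  have e : ~: val i :&: val k' = val k' :\: val i by rewrite setIC setDE.
  rewrite cardsD e cKI cardC cardV; clear -hk ht1 ht2; lia.
apply: (@twoNB i k' (~: val i :\: val k') (fun _ => True)).
- by apply/subsetP => x; rewrite !inE => /andP [].
- by rewrite cS; clear -hk ht1; lia.
move=> z hz hzi a ea; apply: hP.
have hzk : z \notin val k' by move: hz; rewrite !inE => /andP [].
rewrite ea capNB.
have -> : (val k' :\: val i) :\ z = val k' :\: val i.
  apply/setP => x; rewrite !inE.
  case: (eqVneq x z) => [->|] //=; by rewrite (negbTE hzk) andbF.
exact: cKI.
Qed.

Lemma all_t s : s <= k - 1 -> Pt s /\ Pt (k - 1 - s).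
Proof.
elim: s => [|s IH] hs; first by rewrite subn0; split; [exact: P0 | exact: Pk1].
have [IH1 IH2] := IH (ltnW hs).
have Pm : Pt (k - 1 - s.+1).
  case: s IH IH1 IH2 hs => [|s] IH IH1 IH2 hs.
    have -> : k - 1 - 1 = k - 2 by clear -hk; lia.
    exact: Pk2.
  apply: step_a; first by clear -hk hs; lia.
  by have -> : k - 2 - (k - 1 - s.+2) = s.+1 by clear -hk hs; lia.
split => //.
apply: step_b; [by clear -hk hs; lia | by clear -hk hs; lia |].
exact: Pm.
Qed.

Lemma all_C (i k' : V) : Cm u i k'.
Proof.
have ht : #|val i :&: val k'| <= k - 1.
  by move: (subset_leq_card (subsetIl (val i) (val k'))); rewrite cardV.
by have [h _] := all_t ht; apply: h.
Qed.
End Odd.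

Theorem theorem1p1 : forall k : nat, 2 <= k -> no_quantum_symmetry (@odd_adj k).
Proof.
move=> k hk A u H i j k' l; exact: (all_C hk H i k' j l).
Qed.
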